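(* Let $N$ be a positive integer and $\mathbf a,\mathbf b,\mathbf c\in\mathbb R^N$ arbitrary column vectors. For nonnegative integers $l,m,n$ with $l+m+n=N$ let $D_{l,m,n}=[\mathbf a\cdots\mathbf a\ \mathbf b\cdots\mathbf b\ \mathbf c\cdots\mathbf c]$ be the $N\times N$ matrix whose first $l$ columns equal $\mathbf a$, next $m$ columns equal $\mathbf b$, and last $n$ columns equal $\mathbf c$. If $l,m,n,l',m',n'$ are nonnegative integers with $l+m+n=l'+m'+n'=N$, $0\le l<l'$ and $0\le m'<m$, then $$\mathrm{UP}[D_{l,m,n}]+\mathrm{UP}[D_{l',m',n'}]\le \mathrm{UP}[D_{l+1,m-1,n}]+\mathrm{UP}[D_{l'-1,m'+1,n'}].$$
   Context: For a real $N\times N$ matrix $A=[a_{ij}]$, the ultradiscrete permanent is $\mathrm{UP}[A]=\max_{\pi}(a_{1\pi_1}+a_{2\pi_2}+\cdots+a_{N\pi_N})$, the maximum over all permutations $\pi$ of $\{1,\dots,N\}$. *)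

(* Defs.v *)
(* Reals are modelled by an arbitrary realFieldType R
   (the statement is purely order-algebraic, so this generalizes R). *)
From HB Require Import structures.
From mathcomp Require Import all_boot all_order all_fingroup all_algebra.
Set Implicit Arguments. Unset Strict Implicit. Unset Printing Implicit Defensive.
Import Order.TTheory GRing.Theory Num.Theory.
Local Open Scope ring_scope.

(* The identity permutation's term is used as the seed of the max, which
   is harmless since the identity is itself one of the permutations. *)
Definition UP (R : realDomainType) (N : nat) (A : 'M[R]_N) : R :=
  \big[Num.max / \sum_(i < N) A i i]_(s : 'S_N) \sum_(i < N) A i (s i).

(* D_{l,m,n}: first l columns = a, next m columns = b, last n columns = c.
   (n is determined by l + m + n = N; columns with index >= l + m are c.) *)
Definition Dmat (R : realDomainType) (N : nat) (a b c : 'cV[R]_N)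
    (l m n : nat) : 'M[R]_N :=
  \matrix_(i < N, j < N)
     if (j < l)%N then a i 0 else if (j < l + m)%N then b i 0 else c i 0.

(* Main.v *)
Require Import Defs.
From HB Require Import structures.
From mathcomp Require Import all_boot all_order all_fingroup all_algebra.
From mathcomp Require Import ring lra zify.
Import Order.TTheory GRing.Theory Num.Theory.
Local Open Scope ring_scope.

Section G.
Variable R : realDomainType.
Variable N : nat.
Implicit Types A : 'M[R]_N.

Lemma UP_ge A (s : 'S_N) : \sum_i A i (s i) <= UP A.
Proof.
rewrite /UP.
have: s \in index_enum {perm 'I_N} by rewrite mem_index_enum.
elim: (index_enum _) => [//|t r IH]; rewrite inE big_cons.
case/orP=> [/eqP->|/IH H]; first by rewrite le_max lexx.
by rewrite le_max H orbT.
Qed.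

Lemma UP_ex A : exists s : 'S_N, UP A = \sum_i A i (s i).
Proof.
rewrite /UP; apply: (big_ind (fun v => exists s : 'S_N, v = \sum_i A i (s i))).
- by exists 1%g; apply: eq_bigr => i _; rewrite perm1.
- move=> x y [s1 ->] [s2 ->]; case: (leP (\sum_i A i (s1 i)) (\sum_i A i (s2 i))) => _.
  by exists s2. by exists s1.
- by move=> s _; exists s.
Qed.

Lemma swap_sum A (s : 'S_N) i k : i != k ->
  \sum_x A x ((tperm i k * s)%g x) =
  \sum_x A x (s x) - A i (s i) - A k (s k) + A i (s k) + A k (s i).
Proof.
move=> ik.
rewrite (bigD1 i) // (bigD1 k) 1?eq_sym //= [in RHS](bigD1 i) // [in RHS](bigD1 k) 1?eq_sym //=.
rewrite !permM tpermL tpermR.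
rewrite (eq_bigr (fun x => A x (s x))); last first.
  by move=> x /andP[xi xk]; rewrite permM tpermD // eq_sym.
set S := \sum_(_ | _) _.
ring.
Qed.

Lemma step A A' (j0 : 'I_N) (s : 'S_N) k
  (Hcol : forall x, A x (s k) = A x j0)
  (Hoth : forall x j, j != j0 -> A' x j = A x j) :
  \sum_x A x (s x) + A' k j0 - A k j0 <= UP A'.
Proof.
set r := (s^-1)%g j0.
have sr : s r = j0 by rewrite /r permKV.
set sg := (tperm k r * s)%g.
have sgk : sg k = j0 by rewrite /sg permM tpermL.
have E1 : \sum_x A x (sg x) = \sum_x A x (s x).
  apply: eq_bigr => x _; rewrite /sg permM.
  case: tpermP => [->|->|//]; by rewrite ?sr Hcol.
have E2 : \sum_x A' x (sg x) = \sum_x A x (sg x) + A' k j0 - A k j0.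
  rewrite (bigD1 k) // [in RHS](bigD1 k) //= sgk.
  rewrite (eq_bigr (fun x => A x (sg x))); first ring.
  move=> x xk; apply: Hoth; rewrite -sgk; apply/eqP => /perm_inj/eqP.
  by rewrite (negbTE xk).
by rewrite -E1 -E2 UP_ge.
Qed.
End G.

Lemma cnt0 n p : (\sum_(j < n) ((j < p)%N : nat) = minn p n)%N.
Proof.
elim: n => [|n IH]; first by rewrite big_ord0 minn0.
rewrite big_ord_recr /= IH; case: (ltnP n p) => H; lia.
Qed.

Lemma cnt N (s : 'S_N) p : (\sum_(x < N) ((s x < p)%N : nat) = minn p N)%N.
Proof.
by rewrite -(cnt0 N p) [in RHS](reindex_inj (@perm_inj _ s)).
Qed.

Lemma split_ind (p q j : nat) : (p <= q)%N ->
  ((j < q)%N : nat) = ((j < p)%N + ((j < q) && ~~ (j < p))%N : nat)%N.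
Proof. move=> pq; case: (ltnP j q); case: (ltnP j p) => /=; lia. Qed.

Section D.
Variable R : realDomainType.
Variable N : nat.
Variables a b c : 'cV[R]_N.

Lemma DA l m n x (j : 'I_N) : (j < l)%N -> Dmat a b c l m n x j = a x 0.
Proof. by rewrite mxE => ->. Qed.
Lemma DB l m n x (j : 'I_N) : (l <= j)%N -> (j < l + m)%N -> Dmat a b c l m n x j = b x 0.
Proof. move=> H1 H2; rewrite mxE ifF ?H2 //; apply/negbTE; rewrite -leqNgt //. Qed.
Lemma DC l m n x (j : 'I_N) : (l + m <= j)%N -> Dmat a b c l m n x j = c x 0.
Proof. move=> H; rewrite mxE ifF ?ifF //; apply/negbTE; rewrite -leqNgt //; lia. Qed.
End D.

Theorem proposition2 (R : realFieldType) (N : nat) (HN : (0 < N)%N)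
    (a b c : 'cV[R]_N) (l m n l' m' n' : nat)
    (Hs : (l + m + n)%N = N) (Hs' : (l' + m' + n')%N = N)
    (Hl : (l < l')%N) (Hm : (m' < m)%N) :
  UP (Dmat a b c l m n) + UP (Dmat a b c l' m' n')
  <= UP (Dmat a b c l.+1 m.-1 n) + UP (Dmat a b c l'.-1 m'.+1 n').
Proof.
set D := Dmat a b c l m n; set D' := Dmat a b c l' m' n'.
set D1 := Dmat a b c l.+1 m.-1 n; set D2 := Dmat a b c l'.-1 m'.+1 n'.
have lN : (l < N)%N by lia.
have l'N : (l'.-1 < N)%N by lia.
pose j0 := Ordinal lN; pose j1 := Ordinal l'N.
have stepS : forall (s0 : 'S_N) k, (l <= s0 k)%N -> (s0 k < l + m)%N ->
    \sum_x D x (s0 x) + a k 0 - b k 0 <= UP D1.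
  move=> s0 k H1 H2.
  have := @step _ _ D D1 j0 s0 k.
  rewrite /D1 /D (@DA _ _ _ _ _ l.+1) /= ?ltnSn // (@DB _ _ _ _ _ l m) //=; last lia.
  apply.
  - move=> x; rewrite (@DB _ _ _ _ _ l m) // (@DB _ _ _ _ _ l m) //=; lia.
  - move=> x j /eqP jne; rewrite !mxE.
    have jl : (j : nat) <> l by move=> E; apply: jne; apply: val_inj.
    have -> : (l.+1 + m.-1 = l + m)%N by lia.
    have -> : (j < l.+1)%N = (j < l)%N by apply/idP/idP; lia.
    by [].
have stepT : forall (t0 : 'S_N) k, (t0 k < l')%N ->
    \sum_x D' x (t0 x) + b k 0 - a k 0 <= UP D2.
  move=> t0 k H1.
  have := @step _ _ D' D2 j1 t0 k.
  rewrite /D2 /D' (@DB _ _ _ _ _ l'.-1 m'.+1) /= ?leqnn //; last lia.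
  rewrite (@DA _ _ _ _ _ l' m') //=; last lia.
  apply.
  - by move=> x; rewrite (@DA _ _ _ _ _ l' m') // (@DA _ _ _ _ _ l' m') //=; lia.
  - move=> x j /eqP jne; rewrite !mxE.
    have jl : (j : nat) <> l'.-1 by move=> E; apply: jne; apply: val_inj.
    have -> : (l'.-1 + m'.+1 = l' + m')%N by lia.
    have -> : (j < l'.-1)%N = (j < l')%N by apply/idP/idP; lia.
    by [].
have [s Es] := @UP_ex _ _ D; have [t Et] := @UP_ex _ _ D'.
rewrite Es Et.
pose xA x := (s x < l)%N; pose xL x := (s x < l + m)%N.
pose yA x := (t x < l')%N; pose yL x := (t x < l' + m')%N.
have sA : (\sum_x (xA x : nat) = l)%N by rewrite cnt; lia.
have sL : (\sum_x (xL x : nat) = l + m)%N by rewrite cnt; lia.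
have tA : (\sum_x (yA x : nat) = l')%N by rewrite cnt; lia.
have tL : (\sum_x (yL x : nat) = l' + m')%N by rewrite cnt; lia.
have sB : (\sum_x ((xL x && ~~ xA x) : nat) = m)%N.
  have : (\sum_x (xL x : nat) = \sum_x (xA x : nat) + \sum_x ((xL x && ~~ xA x) : nat))%N.
    by rewrite -big_split; apply: eq_bigr => x _; apply: split_ind; lia.
  lia.
have tB : (\sum_x ((yL x && ~~ yA x) : nat) = m')%N.
  have : (\sum_x (yL x : nat) = \sum_x (yA x : nat) + \sum_x ((yL x && ~~ yA x) : nat))%N.
    by rewrite -big_split; apply: eq_bigr => x _; apply: split_ind; lia.
  lia.
case: (pickP (fun x => (xL x && ~~ xA x) && yA x)) => [i /andP[/andP[iL iA] iyA] | noBA].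
  have h1 := stepS s i; have h2 := stepT t i.
  rewrite /xA -leqNgt in iA.
  have := h1 iA iL; have := h2 iyA; lra.
case: (pickP (fun x => (xL x && ~~ xA x) && ~~ yL x)) => [i /andP[/andP[iL iA] iyL] | noBC]; last first.
  suff : (m <= m')%N by lia.
  rewrite -sB -tB; apply: leq_sum => x _.
  move: (noBA x) (noBC x); case: (xL x && ~~ xA x) => //=.
  by case: (yA x); case: (yL x).
case: (pickP (fun x => ~~ xL x && yA x)) => [k /andP[kL kyA] | noCA]; last first.
  suff : (l' <= l)%N by lia.
  rewrite -sA -tA; apply: leq_sum => x _.
  move: (noBA x) (noCA x); case: (yA x) => //; rewrite !andbT.
  case: (xA x) => //; case: (xL x) => //.
have ik : i != k by apply/eqP => E; move: iL; rewrite E (negbTE kL).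
rewrite /xA -leqNgt in iA; rewrite /xL -leqNgt in kL; rewrite /yL -leqNgt in iyL.
have ityA : ~~ (t i < l')%N by rewrite -leqNgt; lia.
have Hs1 := @swap_sum _ _ D s _ _ ik; have Ht1 := @swap_sum _ _ D' t _ _ ik.
have h1 := stepS (tperm i k * s)%g k; rewrite permM tpermR in h1.
have h2 := stepT (tperm i k * t)%g i; rewrite permM tpermL in h2.
have := h1 iA iL; have := h2 kyA.
rewrite Hs1 Ht1.
rewrite /D /D' (@DB _ _ _ _ _ l m _ i (s i)) // (@DC _ _ _ _ _ l m _ k (s k)) //.
rewrite (@DB _ _ _ _ _ l m _ k (s i)) // (@DC _ _ _ _ _ l m _ i (s k)) //.
rewrite (@DC _ _ _ _ _ l' m' _ i (t i)) // (@DA _ _ _ _ _ l' m' _ k (t k)) //.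
rewrite (@DC _ _ _ _ _ l' m' _ k (t i)) // (@DA _ _ _ _ _ l' m' _ i (t k)) //.
lra.
Qed.
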